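(* Let $n\in\mathbb N$ and let $\nu>-1$ be a real number with $\nu\ne0$. Then all zeros of the polynomial $p(z)=F(-n,\nu+2;-n+1-\nu;z)$ lie in the open unit disk $\mathbb D$.
   Context: The hypergeometric function is $F(a,b;c;z)=\sum_{k\ge0}\frac{(a)_k(b)_k}{(c)_k}\frac{z^k}{k!}$, where $(x)_0=1$ and $(x)_k=x(x+1)\cdots(x+k-1)$; when $a=-n$ with $n\in\mathbb N$ the series terminates at $k=n$ and defines a polynomial for all $z\in\mathbb C$ whenever $c\notin\{0,-1,\dots,1-n\}$. $\mathbb D=\{|z|<1\}$. *)

(* Defs.v *)
From HB Require Import structures.
From mathcomp Require Import all_boot all_order all_algebra.
From mathcomp Require Import complex.
From mathcomp Require Import reals.
Set Implicit Arguments. Unset Strict Implicit. Unset Printing Implicit Defensive.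
Import Order.TTheory GRing.Theory Num.Theory.
Local Open Scope ring_scope.

Definition poch (F : ringType) (x : F) (k : nat) : F :=
  \prod_(i < k) (x + i%:R).

(* The terminating hypergeometric polynomial F(-n, b; c; z)
   = sum_{k=0}^n (-n)_k (b)_k / (c)_k  z^k / k!  *)
Definition hyp_poly (F : fieldType) (n : nat) (b c : F) : {poly F} :=
  \poly_(k < n.+1) (poch (- n%:R) k * poch b k / (poch c k * k`!%:R)).

(* Main.v *)
Require Import Defs.
From HB Require Import structures.
From mathcomp Require Import all_boot all_order all_algebra.
From mathcomp Require Import complex.
From mathcomp Require Import reals.
From mathcomp Require Import ring lra zify.
Import Order.TTheory GRing.Theory Num.Theory.
Local Open Scope ring_scope.
Local Open Scope complex_scope.
Set Implicit Arguments. Unset Strict Implicit.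
Section S.
Variable R : realType.
Local Notation C := R[i].
Definition n2 (x : C) : R := complex.Re x ^+ 2 + complex.Im x ^+ 2.

Lemma keyR (m nu p q r : R) : 1 <= m -> -1 < nu -> 0 <= p -> 0 <= q ->
  r ^+ 2 <= p * q -> p <= nu ^+ 2 * q ->
  2 * nu * r <= - (m + 2 * nu) * p + nu ^+ 2 * (m + 2 * nu + 2) * q.
Proof.
move=> hm hnu hp hq hr hpq.
set A := m + 2 * nu.
have hA : -1 < A by rewrite /A; lra.
set y := nu ^+ 2 * q.
have hy : p <= y by [].
have hL : 0 <= - A * p + (A + 2) * y.
  have [hA0|hA0] := leP 0 A; nra.
have hL2 : 4 * (nu ^+ 2 * p * q) <= (- A * p + (A + 2) * y) ^+ 2.
  have e : (- A * p + (A + 2) * y) ^+ 2 - 4 * (nu ^+ 2 * p * q)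
     = (y - p) * ((A + 2) ^+ 2 * y - A ^+ 2 * p) by rewrite /y; ring.
  have : 0 <= (y - p) * ((A + 2) ^+ 2 * y - A ^+ 2 * p).
    apply: mulr_ge0; first lra.
    have h1 : A ^+ 2 <= (A + 2) ^+ 2 by nra.
    have h2 : 0 <= A ^+ 2 by exact: sqr_ge0.
    nra.
  lra.
have : (2 * nu * r) ^+ 2 <= (- A * p + (A + 2) * y) ^+ 2.
  have : (2 * nu * r) ^+ 2 = 4 * nu ^+ 2 * r ^+ 2 by ring.
  move=> ->.
  have h0 : 0 <= nu ^+ 2 by exact: sqr_ge0.
  nra.
have -> : - A * p + nu ^+ 2 * (A + 2) * q = - A * p + (A + 2) * y by rewrite /y; ring.
move=> h; nra.
Qed.
Lemma keyC (m nu : R) (E V : C) : 1 <= m -> -1 < nu ->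
  n2 E <= nu ^+ 2 * n2 V ->
  n2 ((m + nu)%:C * E + (nu * (nu + 1))%:C * V) <= nu ^+ 2 * n2 (E + (m + nu + 1)%:C * V).
Proof.
case: E => e1 e2; case: V => v1 v2; rewrite /n2 /= => hm hnu h.
have := keyR (r := e1 * v1 + e2 * v2) hm hnu (p := e1 ^+ 2 + e2 ^+ 2) (q := v1 ^+ 2 + v2 ^+ 2).
have hp : 0 <= e1 ^+ 2 + e2 ^+ 2 by apply: addr_ge0; exact: sqr_ge0.
have hq : 0 <= v1 ^+ 2 + v2 ^+ 2 by apply: addr_ge0; exact: sqr_ge0.
have hr : (e1 * v1 + e2 * v2) ^+ 2 <= (e1 ^+ 2 + e2 ^+ 2) * (v1 ^+ 2 + v2 ^+ 2).
  have -> : (e1 ^+ 2 + e2 ^+ 2) * (v1 ^+ 2 + v2 ^+ 2) = (e1 * v1 + e2 * v2) ^+ 2 + (e1 * v2 - e2 * v1) ^+ 2 by ring.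
  have := sqr_ge0 (e1 * v2 - e2 * v1); lra.
move=> /(_ hp hq hr h) hk.
have hm0 : 0 <= m by lra.
set K := (X in X <= _) in hk.
set L := (X in _ <= X) in hk.
have : 0 <= m * (L - K) by apply: mulr_ge0 => //; lra.
rewrite /K /L.
idtac.
move=> H; lra.
Qed.
Lemma pochS (F : comRingType) (x : F) k : poch x k.+1 = poch x k * (x + k%:R).
Proof. by rewrite /poch big_ord_recr. Qed.
Lemma poch0 (F : comRingType) (x : F) : poch x 0 = 1.
Proof. by rewrite /poch big_ord0. Qed.

Lemma binR n k : (k <= n)%N ->
  ('C(n, k)%:R : C) = n`!%:R / (k`!%:R * (n - k)`!%:R).
Proof.
move=> hk; rewrite -(bin_fact hk) !natrM mulfK //.
by rewrite mulf_neq0 // pnatr_eq0 -lt0n fact_gt0.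
Qed.

Lemma arith1 (nu : R) (n : nat) : -1 < nu -> nu ^+ 2 < (n.+1%:R + nu + 1) ^+ 2.
Proof.
move=> hnu; rewrite -subr_gt0 -natr1.
have hn : 0 <= n%:R :> R by [].
have -> : (n%:R + 1 + nu + 1) ^+ 2 - nu ^+ 2 = (n%:R + 2) * (n%:R + 2 + 2 * nu) by ring.
apply: mulr_gt0; lra.
Qed.
Lemma arith2 (c nu P Q : R) : nu ^+ 2 < c ^+ 2 -> 0 < P -> 0 < Q ->
  c ^+ 2 * P * Q <= nu ^+ 2 * P * Q -> False.
Proof.
move=> h1 h2 h3 h4; have hPQ : 0 < P * Q by exact: mulr_gt0.
move: h4; rewrite -!(mulrA _ P) ler_pM2r // => h; lra.
Qed.
Lemma arith3 (nu Z : R) : 1 <= Z -> nu ^+ 2 <= nu ^+ 2 * Z * 1.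
Proof. move=> h; have := sqr_ge0 nu; nra. Qed.
Lemma arith4 (nu Z X Y W : R) : 1 <= Z -> 0 <= X -> 0 <= Y -> X <= nu ^+ 2 * Y ->
  Z * X <= nu ^+ 2 * Z * (Z * Y).
Proof.
move=> hz hX hY h; have h0 : 0 <= nu ^+ 2 * Y by apply: mulr_ge0 => //; exact: sqr_ge0.
have p1 : 0 <= (Z - 1) * (nu ^+ 2 * Y) by apply: mulr_ge0 => //; lra.
have p2 : 0 <= Z * (nu ^+ 2 * Y - X) by apply: mulr_ge0; lra.
have p3 : 0 <= Z * ((Z - 1) * (nu ^+ 2 * Y)) by apply: mulr_ge0 => //; lra.
rewrite -subr_ge0.
have -> : nu ^+ 2 * Z * (Z * Y) - Z * X = Z * (nu ^+ 2 * Y - X) + Z * ((Z - 1) * (nu ^+ 2 * Y)) by ring.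
exact: addr_ge0.
Qed.

Variable nu : R.
Let a : C := (nu + 2)%:C.
Let b : C := nu%:C.
Definition cc n k : C := 'C(n, k)%:R * poch a k * poch b (n - k).
Definition Pp n : {poly C} := \poly_(k < n.+1) cc n k.

Lemma coefPp n k : (Pp n)`_k = cc n k.
Proof. rewrite coef_poly; case: ltnP => // h; by rewrite /cc bin_small // !mul0r. Qed.

Lemma cc_rec n j : cc n.+2 j.+1 = (b + n.+1%:R) * cc n.+1 j.+1 +
   ((a + n.+1%:R) * cc n.+1 j - (n.+1%:R * (a + b + n%:R)) * cc n j).
Proof.
case: (ltngtP j n.+1) => hj.
- have hjn : (j <= n)%N by [].
  move: (subnKC hjn) => e; set m := (n - j)%N in e.
  rewrite /cc -e.
  have -> : ((j + m).+2 - j.+1 = m.+1)%N by lia.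
  have -> : ((j + m).+1 - j.+1 = m)%N by lia.
  have -> : ((j + m).+1 - j = m.+1)%N by lia.
  have -> : ((j + m) - j = m)%N by lia.
  rewrite (binR (n := (j+m).+2) (k := j.+1)); last lia.
  rewrite (binR (n := (j+m).+1) (k := j.+1)); last lia.
  rewrite (binR (n := (j+m).+1) (k := j)); last lia.
  rewrite (binR (n := (j+m)) (k := j)); last lia.
  have -> : ((j + m).+2 - j.+1 = m.+1)%N by lia.
  have -> : ((j + m).+1 - j.+1 = m)%N by lia.
  have -> : ((j + m).+1 - j = m.+1)%N by lia.
  have -> : ((j + m) - j = m)%N by lia.
  rewrite !pochS !factS !natrM.
  have hf : forall k, (k`!%:R : C) != 0 by move=> k; rewrite pnatr_eq0 -lt0n fact_gt0.
  rewrite /a /b.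
  field.
  by rewrite !hf -!mulrS !pnatr_eq0.
- by rewrite /cc !(@bin_small _ j) ?(@bin_small _ j.+1) ?mul0r ?mulr0 ?subr0 ?addr0 //; lia.
- subst j; rewrite /cc !binn !subnn (@bin_small n.+1) // (@bin_small n) //.
  rewrite !mul0r !mulr0 !poch0 subr0 add0r !mulr1 (pochS a n.+1).
  by rewrite !mul1r mulrC.
Qed.
Lemma Pp_rec n : Pp n.+2 = (b + n.+1%:R) *: Pp n.+1 +
  ((a + n.+1%:R) *: Pp n.+1 - (n.+1%:R * (a + b + n%:R)) *: Pp n) * 'X.
Proof.
apply/polyP => k; rewrite coefD coefMX !coefZ coefB !coefZ !coefPp.
case: k => [|j]; last by rewrite /= cc_rec.
rewrite /= /cc !bin0 !subn0 !poch0 (pochS b n.+1) addr0; ring.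
Qed.

Lemma v_rec n z : (Pp n.+2).[z] = (b + n.+1%:R) * (Pp n.+1).[z] +
  ((a + n.+1%:R) * (Pp n.+1).[z] - (n.+1%:R * (a + b + n%:R)) * (Pp n).[z]) * z.
Proof. by rewrite Pp_rec !hornerE. Qed.

Lemma v0 z : (Pp 0).[z] = 1.
Proof. by rewrite /Pp horner_poly big_ord1 /cc bin0 !poch0 !mulr1. Qed.

Lemma v1 z : (Pp 1).[z] = b + a * z.
Proof.
rewrite /Pp horner_poly big_ord_recr big_ord1 /cc.
rewrite [X in _ + X]/= bin0 binn subnn subn0 (pochS a 0) (pochS b 0) !poch0 /=; ring.
Qed.

Lemma F1 k m : poch (- (k + m)%:R : C) k * m`!%:R = (-1) ^+ k * (k + m)`!%:R.
Proof.
elim: k m => [|k IH] m; first by rewrite poch0 expr0 !mul1r add0n.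
rewrite pochS addSnnS.
have := IH m.+1; rewrite factS natrM => h.
rewrite exprS -mulrA -h.
have -> : (- (k + m.+1)%:R + k%:R : C) = - (m.+1%:R) by rewrite natrD; ring.
ring.
Qed.

Lemma F2 k m : poch (- (k + m)%:R + 1 - b) k * poch b m = (-1) ^+ k * poch b (k + m).
Proof.
elim: k m => [|k IH] m; first by rewrite poch0 expr0 !mul1r add0n.
rewrite pochS addSnnS.
have := IH m.+1; rewrite pochS => h.
rewrite exprS -mulrA -h.
have -> : (- (k + m.+1)%:R + 1 - b + k%:R : C) = - (b + m%:R) by rewrite !natrD; ring.
ring.
Qed.

Hypothesis hnu : -1 < nu.
Hypothesis hnu0 : nu != 0.

Lemma pochb_neq0 k : poch b k != 0.
Proof.
elim: k => [|k IH]; first by rewrite poch0 oner_eq0.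
rewrite pochS mulf_neq0 //.
have -> : b + k%:R = (nu + k%:R)%:C by rewrite rmorphD rmorph_nat.
apply/negP => /eqP /complexI h.
case: k h IH => [|k] h _; first by move: hnu0; rewrite addr0 in h; rewrite h eqxx.
have : (1 <= k.+1%:R :> R) by rewrite ler1n.
move: h; set x := (k.+1%:R : R); move: x => x h1 h2; move/eqP: h1; rewrite addr_eq0 => /eqP e; have := hnu; rewrite e; lra.
Qed.

Lemma hypE n : hyp_poly n (nu + 2)%:C (- n%:R + 1 - nu)%:C = (poch b n)^-1 *: Pp n.
Proof.
apply/polyP => k; rewrite coefZ coefPp coef_poly.
case: ltnP => hk; last by rewrite /cc bin_small // !mul0r mulr0.
have hkn : (k <= n)%N by [].
have e := subnKC hkn.
have f1 := F1 k (n - k); rewrite e in f1.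
have f2 := F2 k (n - k); rewrite e in f2.
have -> : (- n%:R + 1 - nu)%:C = - n%:R + 1 - b by rewrite ?(rmorphB, rmorphD, rmorphN, rmorph1, rmorph_nat).
have hf : forall k, (k`!%:R : C) != 0 by move=> i; rewrite pnatr_eq0 -lt0n fact_gt0.
have hs : ((-1) ^+ k : C) != 0 by rewrite signr_eq0.
have -> : poch (- n%:R : C) k = (-1) ^+ k * n`!%:R / (n - k)`!%:R.
  by rewrite -f1 mulfK.
have -> : poch (- n%:R + 1 - b : C) k = (-1) ^+ k * poch b n / poch b (n - k).
  by rewrite -f2 mulfK // pochb_neq0.
rewrite /cc (binR hkn) -/a.
have := pochb_neq0 n; have := pochb_neq0 (n - k) => h1 h2.
field.
by rewrite h1 h2 hs !hf.
Qed.

Lemma n2M x y : n2 (x * y) = n2 x * n2 y.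
Proof. case: x => p q; case: y => r s; rewrite /n2 /=. ring. Qed.
Lemma n2R (x : R) : n2 x%:C = x ^+ 2.
Proof. rewrite /n2 /=. ring. Qed.
Lemma n2_ge0 x : 0 <= n2 x.
Proof. rewrite /n2; apply: addr_ge0; exact: sqr_ge0. Qed.
Lemma n2_eq0 x : (n2 x == 0) = (x == 0).
Proof.
case: x => p q; rewrite /n2 /= paddr_eq0 ?sqr_ge0 // !sqrf_eq0 eq_complex /=. done.
Qed.
Lemma n2N x : n2 (- x) = n2 x.
Proof. case: x => p q; rewrite /n2 /=. ring. Qed.
Lemma n2_gt0 x : x != 0 -> 0 < n2 x.
Proof. by move=> h; rewrite lt_def n2_eq0 h n2_ge0. Qed.

Variable z : C.
Hypothesis hz : 1 <= n2 z.

Let v n := (Pp n).[z].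
Definition Inv n := v n != 0 /\
  n2 (v n.+1 - (n.+1%:R + nu + 1)%:C * z * v n) <= nu ^+ 2 * n2 z * n2 (v n).

Lemma z_neq0 : z != 0.
Proof. by rewrite -n2_eq0; apply/negP => /eqP h; move: hz; rewrite h; lra. Qed.

Lemma Inv_nz n : Inv n -> v n.+1 != 0.
Proof.
move=> [hv hi]; apply/negP => /eqP h0.
move: hi; rewrite h0 sub0r n2N !n2M n2R.
have p1 := n2_gt0 hv.
have p2 : 0 < n2 z by exact: n2_gt0 z_neq0.
move=> h; exact: arith2 (arith1 n hnu) p2 p1 h.
Qed.

Lemma Inv0 : Inv 0.
Proof.
split; first by rewrite /v v0 oner_eq0.
rewrite /v v0 v1 mulr1.
have -> : b + a * z - (1%:R + nu + 1)%:C * z = b.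
  rewrite /a /b ?(rmorphD, rmorph1, rmorph_nat); ring.
rewrite /b n2R /n2 /= expr0n /= addr0 expr1n.
exact: arith3.
Qed.

Lemma Inv_step n : Inv n -> Inv n.+1.
Proof.
move=> I; have hv1 := Inv_nz I; case: I => hv hi; split => //.
set m : R := n.+1%:R.
have hm : 1 <= m by rewrite /m ler1n.
set D := v n.+1 - (n.+1%:R + nu + 1)%:C * z * v n.
set E := D / z.
have hzC := z_neq0.
have hE : n2 E <= nu ^+ 2 * n2 (v n).
  have eD : D = z * E by rewrite /E mulrC divfK.
  move: hi; rewrite -/D eD n2M.
  have p2 : 0 < n2 z by exact: n2_gt0 z_neq0.
  move=> h.
  have : n2 z * n2 E <= n2 z * (nu ^+ 2 * n2 (v n)) by rewrite mulrCA mulrA.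
  by rewrite ler_pM2l.
have K := keyC hm hnu hE.
have e1 : v n.+2 - (n.+2%:R + nu + 1)%:C * z * v n.+1 =
   z * ((m + nu)%:C * E + (nu * (nu + 1))%:C * v n).
  rewrite /E /D /m /v v_rec /a /b.
  rewrite ?(rmorphD, rmorphM, rmorph1, rmorph_nat).
  field; exact: hzC.
have e2 : v n.+1 = z * (E + (m + nu + 1)%:C * v n).
  rewrite /E /D /m.
  rewrite ?(rmorphD, rmorphM, rmorph1, rmorph_nat).
  field; exact: hzC.
rewrite e1 e2 !n2M.
exact: arith4 hz (n2_ge0 _) (n2_ge0 _) K.
Qed.

Lemma v_neq0 n : v n != 0.
Proof.
have I : forall k, Inv k.
  by elim=> [|k IH]; [exact: Inv0 | exact: Inv_step].
case: n => [|n]; first by case: (I 0%N).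
exact: Inv_nz (I n).
Qed.

End S.

Unset Implicit Arguments. Set Strict Implicit.
Theorem lemma4 (R : realType) (n : nat) (nu : R) (hnu : -1 < nu) (hnu0 : nu != 0) :
  forall z : R[i],
    root (hyp_poly n (nu + 2)%:C (- n%:R + 1 - nu)%:C) z -> `|z| < 1.
Proof.
move=> z; rewrite hypE // => /rootP; rewrite hornerZ => /eqP.
rewrite mulf_eq0 invr_eq0 (negbTE (pochb_neq0 hnu hnu0 n)) /= => /eqP h.
rewrite normc_def -/(n2 z) (_ : 1 = 1%:C) // ltcR.
case: (ltP (n2 z) 1) => hz.
  by have := ltr_sqrt (n2 z) (ltr01 : (0 : R) < 1); rewrite sqrtr1 => ->.
by have := v_neq0 hnu hz n; rewrite h eqxx.
Qed.
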